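(* Let $n \ge 1$ and $t$ be integers with $1 \le t < \frac{n+1}{2}$. Then the colorless cross-blockchain transaction task $(\mathcal{I}, \mathcal{O}', \Xi)$ on $n+1$ blockchains, defined in the context, has no $t$-resilient protocol in the asynchronous message-passing model with crash failures.
   Context: Setting. There are $n+1$ distinct blockchains $C_0,\dots,C_n$. An $(n+1)$-party cross-blockchain transaction touches exactly one block $v_i$ on each blockchain $C_i$. Input complex $\mathcal{I}$. The vertices are the pairs $(v_i, a)$ with $0 \le i \le n$ and $a \in \{0,1,\bot\}$. Here $0$ means not committed, $1$ means committed, and $\bot$ means the block's branch was suspended by a fork. A nonempty set of vertices is a simplex if and only if its vertices involve pairwise distinct blocks. Colorless output complex $\mathcal{O}'$. Its vertices are the values $0$ (aborted) and $1$ (committed), and its only simplices are $\{0\}$ and $\{1\}$. Colorless carrier map $\Xi$. For a simplex $\sigma$ of $\mathcal{I}$: - $\Xi(\sigma)=\{1\}$ if all input values in $\sigma$ are $1$; - $\Xi(\sigma)=\{0\}$ if some input value in $\sigma$ is $\bot$; - $\Xi(\sigma)=\mathcal{O}'$ otherwise. Computational model. There are $n+1$ processes (one per blockchain) communicating by asynchronous message passing, and at most $t$ of them may fail by crashing. Process $i$ starts with an input vertex $(v_i, a_i)$ of $\mathcal{I}$. A protocol solves the colorless task if, for every execution with at most $t$ crashes, every non-crashed process eventually decides a value in $\{0,1\}$. Moreover, if $\sigma$ is the simplex of inputs of the participating processes, the set of decided values must be a simplex of $\Xi(\sigma)$; in particular all decided values must be equal. Such a protocol is called $t$-resilient. *)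

(* Defs.v *)
From mathcomp Require Import all_boot.
Set Implicit Arguments. Unset Strict Implicit. Unset Printing Implicit Defensive.

(* Input values: 0 = not committed, 1 = committed, bot = branch suspended by a fork. *)
Inductive inval := V0 | V1 | Vbot.

(* A step of process p: given its current state and possibly a received message
   (tagged with its sender), it moves to a new state and sends a finite list of
   messages (destination, payload).  [p_decide] gives the decided value, if any
   (false = 0 = aborted, true = 1 = committed). *)
Record protocol (n : nat) (Block : Type) := Protocol {
  State : Type;
  Msg : Type;
  p_init : 'I_n.+1 -> Block * inval -> State;
  p_step : 'I_n.+1 -> State -> option ('I_n.+1 * Msg) -> State * seq ('I_n.+1 * Msg);
  p_decide : State -> option bool }.

(* An infinite execution: at time k process [sched k] takes a step, receiving
   either nothing ([recv k = None]) or the message identified by (s, j): the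
   j-th message sent at step s.  [sent k] lists the messages sent at step k and
   [st k p] is the local state of p before step k. *)
Record execution (n : nat) (Block : Type) (P : protocol n Block) := Execution {
  sched : nat -> 'I_n.+1;
  recv : nat -> option (nat * nat);
  sent : nat -> seq ('I_n.+1 * Msg P);
  st : nat -> 'I_n.+1 -> State P }.

Section Model.
Variables (n : nat) (Block : Type) (P : protocol n Block).

Definition correct (E : execution P) (p : 'I_n.+1) : Prop :=
  forall T, exists k, (T <= k)%N /\ sched E k = p.

Definition participates (E : execution P) (p : 'I_n.+1) : Prop :=
  exists k, sched E k = p.

Definition delivered (E : execution P) (k : nat) (inm : option ('I_n.+1 * Msg P)) : Prop :=
  match recv E k with
  | None => inm = None
  | Some (s, j) => (s < k)%N /\
      exists m, onth (sent E s) j = Some (sched E k, m) /\ inm = Some (sched E s, m)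
  end.

Definition admissible (t : nat) (v : 'I_n.+1 -> Block) (a : 'I_n.+1 -> inval)
    (E : execution P) : Prop :=
  [/\ (forall p, st E 0 p = @p_init _ _ P p (v p, a p)),
      (forall k q, q != sched E k -> st E k.+1 q = st E k q),
      (forall k, exists inm, delivered E k inm /\
          @p_step _ _ P (sched E k) (st E k (sched E k)) inm = (st E k.+1 (sched E k), sent E k)),
      (forall k k' sj, recv E k = Some sj -> recv E k' = Some sj -> k = k') /\
      (forall s j d m, onth (sent E s) j = Some (d, m) -> correct E d ->
          exists k, recv E k = Some (s, j))
    & (exists F : {set 'I_n.+1}, #|F| <= t /\ forall p, p \notin F -> correct E p)].

Definition decides (E : execution P) (p : 'I_n.+1) (b : bool) : Prop :=
  exists k, @p_decide _ _ P (st E k p) = Some b.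

End Model.

Definition out_simplex (tau : {set bool}) : Prop :=
  tau = [set false] \/ tau = [set true].

(* Colorless carrier map Xi, on an input simplex sigma given as a set of input
   vertices; [Xi sigma tau] means tau is a simplex of Xi(sigma). *)
Definition Xi (Block : Type) (sigma : Block * inval -> Prop) (tau : {set bool}) : Prop :=
  let all1 := forall x, sigma x -> x.2 = V1 in
  let somebot := exists x, sigma x /\ x.2 = Vbot in
  (all1 /\ tau = [set true]) \/
  (somebot /\ tau = [set false]) \/
  (~ all1 /\ ~ somebot /\ out_simplex tau).

Definition part_inputs n (Block : Type) (P : protocol n Block) (E : execution P)
    (v : 'I_n.+1 -> Block) (a : 'I_n.+1 -> inval) : Block * inval -> Prop :=
  fun x => exists p, participates E p /\ x = (v p, a p).

Definition solves_t_resilient n (Block : Type) (P : protocol n Block) (t : nat)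
    (v : 'I_n.+1 -> Block) : Prop :=
  forall (a : 'I_n.+1 -> inval) (E : execution P), admissible t v a E ->
    (forall p, correct E p -> exists b, decides E p b) /\
    (exists tau, Xi (part_inputs E v a) tau /\
        forall p b, decides E p b -> b \in tau).

(* Main.v *)
Require Import Defs.
From mathcomp Require Import all_boot.
Set Implicit Arguments. Unset Strict Implicit. Unset Printing Implicit Defensive.

Definition first (N : nat) (a : pred nat) := find a (iota 0 N).

Lemma first_le N (a : pred nat) i : i < N -> a i -> first N a <= i.
Proof.
move=> iN ai; rewrite leqNgt; apply/negP => /(before_find 0).
by rewrite nth_iota // add0n ai.
Qed.

Lemma first_P N (a : pred nat) : first N a < N -> a (first N a).
Proof.
move=> h; have hs : first N a < size (iota 0 N) by rewrite size_iota.
have := nth_find 0 (_ : has a (iota 0 N)).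
rewrite has_find => /(_ hs); by rewrite nth_iota // add0n.
Qed.

Section Construct.
Variables (n : nat) (Block : Type) (P : protocol n Block) (init : 'I_n.+1 -> State P).

Definition goodm (L : seq (seq ('I_n.+1 * Msg P))) (D : seq (nat*nat)) (p : 'I_n.+1) (s j : nat) : bool :=
  ((s, j) \notin D) && (match onth (nth [::] L s) j with Some (d, _) => d == p | None => false end).

Definition okm L D p s := has (goodm L D p s) (iota 0 (size (nth [::] L s))).

Definition pick L D p : option (nat*nat) :=
  let s0 := first (size L) (okm L D p) in
  if s0 < size L then Some (s0, first (size (nth [::] L s0)) (goodm L D p s0)) else None.

Lemma goodm_size L D p s j : goodm L D p s j -> j < size (nth [::] L s).
Proof.
rewrite /goodm => /andP[_]; case E: onth => [[d m]|] // _.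
by rewrite -onthTE E.
Qed.

Lemma pick_some L D p s j : pick L D p = Some (s,j) -> s < size L /\ goodm L D p s j.
Proof.
rewrite /pick; case: ifP => // h; case=> e1 e2; subst s j; split => //.
have := first_P h; rewrite /okm => hh.
apply: first_P; by move: hh; rewrite has_find size_iota.
Qed.

Lemma pick_min L D p s j : s < size L -> goodm L D p s j ->
  exists s' j', pick L D p = Some (s',j') /\ (s' < s \/ (s' = s /\ j' <= j)).
Proof.
move=> sL g.
have oks : okm L D p s by apply/hasP; exists j => //; rewrite mem_iota add0n (goodm_size g).
have le := first_le sL oks.
rewrite /pick (leq_ltn_trans le sL).
do 2 eexists; split; first reflexivity.
move: le; rewrite leq_eqVlt => /orP[/eqP e|]; last by left.
right; split => //; rewrite e; exact: first_le (goodm_size g) g.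
Qed.

Record cfg := Cfg { cst : 'I_n.+1 -> State P; chs : seq (seq ('I_n.+1 * Msg P));
                    chp : seq 'I_n.+1; cD : seq (nat*nat) }.

Variable K : option nat.
Definition rr k : 'I_n.+1 := inord (1 + k %% n).
Definition schedf k := if K == Some k then ord0 else rr k.
Definition recvf k c := if K == Some k then None else pick (chs c) (cD c) (rr k).
Definition payload c (x : option (nat*nat)) : option ('I_n.+1 * Msg P) :=
  match x with
  | Some (s, j) => match onth (nth [::] (chs c) s) j with
                   | Some (_, m) => Some (nth ord0 (chp c) s, m)
                   | None => None end
  | None => None end.
Definition out k c := @p_step _ _ P (schedf k) (cst c (schedf k)) (payload c (recvf k c)).
Definition next k c :=
  Cfg (fun q => if q == schedf k then (out k c).1 else cst c q)
      (rcons (chs c) (out k c).2) (rcons (chp c) (schedf k))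
      (if recvf k c is Some x then x :: cD c else cD c).
Fixpoint cfgf k := if k is k'.+1 then next k' (cfgf k') else Cfg init [::] [::] [::].

Definition exec : execution P :=
  @Execution _ _ P schedf (fun k => recvf k (cfgf k)) (fun k => (out k (cfgf k)).2) (fun k => cst (cfgf k)).

Lemma size_chs k : size (chs (cfgf k)) = k /\ size (chp (cfgf k)) = k.
Proof. by elim: k => [|k [h1 h2]] //=; rewrite !size_rcons h1 h2. Qed.

Lemma nth_chs k s : s < k -> nth [::] (chs (cfgf k)) s = sent exec s
   /\ nth ord0 (chp (cfgf k)) s = sched exec s.
Proof.
elim: k => [|k IH] // sk /=.
have [h1 h2] := size_chs k.
rewrite !nth_rcons h1 h2.
move: sk; rewrite ltnS leq_eqVlt => /orP[/eqP->|sk]; first by rewrite ltnn eqxx.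
by rewrite sk; apply: IH.
Qed.

Lemma cD_mono k d x : x \in cD (cfgf k) -> x \in cD (cfgf (k + d)).
Proof.
elim: d => [|d IH]; first by rewrite addn0.
move=> /IH; rewrite addnS /=; case: recvf => // y; rewrite inE => ->; by rewrite orbT.
Qed.


Hypothesis n_pos : 0 < n.

Lemma rr_val k : nat_of_ord (rr k) = 1 + k %% n.
Proof. by rewrite /rr inordK // ltnS ltn_pmod. Qed.

Lemma rr_ne0 k : rr k != ord0.
Proof. by apply/eqP => /(congr1 (@nat_of_ord _)); rewrite rr_val. Qed.

Lemma rr_hit N (d : 'I_n.+1) : d != ord0 -> exists k, N <= k /\ rr k = d.
Proof.
move=> d0; have dpos : 0 < val d by rewrite lt0n; apply: contra d0 => /eqP h; apply/eqP/val_inj.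
exists (N * n + (val d).-1); split.
  by apply: leq_trans (leq_addr _ _); rewrite leq_pmulr.
apply/eqP; rewrite -val_eqE /= rr_val modnMDl modn_small; first by rewrite add1n prednK.
by rewrite -ltnS prednK // -ltnS.
Qed.

Lemma sched_hit N (d : 'I_n.+1) : d != ord0 -> exists k, N <= k /\ schedf k = d.
Proof.
move=> d0; have [k [h1 h2]] := rr_hit (maxn N (odflt 0 K).+1) d0.
exists k; split; first by apply: leq_trans h1; rewrite leq_maxl.
rewrite /schedf; case: eqP => [e|_]; last exact: h2.
by move: h1; rewrite e /= geq_max ltnn andbF.
Qed.

Lemma schedf0 k : schedf k = ord0 -> K = Some k.
Proof. by rewrite /schedf; case: eqP => // _ h; move: (rr_ne0 k); rewrite h eqxx. Qed.

Lemma correct_ne0 d : correct exec d -> d != ord0.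
Proof.
move=> c; apply/eqP => e; subst d.
have [k [h1 h2]] := c (odflt 0 K).+1.
move: h2 => /= /schedf0 e; by rewrite e /= ltnn in h1.
Qed.

Lemma correct_all d : d != ord0 -> correct exec d.
Proof. by move=> d0 T; have [k [h1 h2]] := sched_hit T d0; exists k. Qed.

Lemma step_ok k : exists inm, delivered exec k inm /\
  @p_step _ _ P (sched exec k) (st exec k (sched exec k)) inm = (st exec k.+1 (sched exec k), sent exec k).
Proof.
exists (payload (cfgf k) (recvf k (cfgf k))); split; last first.
  by rewrite /= eqxx /out -surjective_pairing.
rewrite /delivered /=.
case E: (recvf k (cfgf k)) => [[s j]|] //.
move: E; rewrite /recvf; case: eqP => // Kk /pick_some [sk g].
have [h1 _] := size_chs k; rewrite h1 in sk.
have [e1 e2] := nth_chs sk.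
split => //.
move: g; rewrite /goodm /payload e1 e2 => /andP[_].
case: onth => [[d m]|] // /eqP ->; exists m; split => //.
by rewrite /schedf; case: eqP.
Qed.

Lemma recv_notin k x : recvf k (cfgf k) = Some x -> x \notin cD (cfgf k) /\ x \in cD (cfgf k.+1).
Proof.
move=> E; split; last by rewrite /= E inE eqxx.
move: E; rewrite /recvf; case: eqP => // _; case: x => s j /pick_some [_].
by rewrite /goodm => /andP[].
Qed.

Lemma recv_inj k k' x : recvf k (cfgf k) = Some x -> recvf k' (cfgf k') = Some x -> k = k'.
Proof.
wlog: k k' / k <= k'.
  move=> W h h'; case: (leqP k k') => kk; first exact: W.
  by symmetry; apply: W => //; apply: ltnW.
rewrite leq_eqVlt => /orP[/eqP //|kk] h h'.
have [_ i1] := recv_notin h; have [n1 _] := recv_notin h'.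
have := cD_mono (k' - k.+1) i1; rewrite subnKC //.
by rewrite (negbTE n1).
Qed.


Lemma mono_le k k' x : k <= k' -> x \in cD (cfgf k) -> x \in cD (cfgf k').
Proof. by move=> kk /(cD_mono (k' - k)); rewrite subnKC. Qed.

Lemma deliver_at k s j d m T :
  T <= k -> s < k -> schedf k = d -> d != ord0 ->
  onth (sent exec s) j = Some (d, m) ->
  (forall s' j' d' m', s' < s -> onth (sent exec s') j' = Some (d', m') -> d' != ord0 -> (s', j') \in cD (cfgf T)) ->
  (forall j' d' m', j' < j -> onth (sent exec s) j' = Some (d', m') -> d' != ord0 -> (s, j') \in cD (cfgf T)) ->
  (s, j) \in cD (cfgf k.+1).
Proof.
move=> Tk sk hd d0 E H1 H2.
have Kk : (K == Some k) = false.
  by apply/negbTE; apply/eqP => e; move: hd d0; rewrite /schedf e eqxx => <-; rewrite eqxx.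
have rrk : rr k = d by move: hd; rewrite /schedf Kk.
case: (boolP ((s, j) \in cD (cfgf k))) => [iD|nD].
  by apply: (mono_le (leqnSn k)).
have [e1 _] := nth_chs sk.
have g : goodm (chs (cfgf k)) (cD (cfgf k)) (rr k) s j by rewrite /goodm nD e1 E rrk eqxx.
have [hs _] := size_chs k.
have sk' : s < size (chs (cfgf k)) by rewrite hs.
have [s' [j' [pk cmp]]] := pick_min sk' g.
have [s'k g'] := pick_some pk.
rewrite hs in s'k.
have [e1' _] := nth_chs s'k.
move: g'; rewrite /goodm e1' => /andP[nD'].
case E': onth => [[d' m']|] // /eqP ed'.
have d'0 : d' != ord0 by rewrite ed' rr_ne0.
have pk' : recvf k (cfgf k) = Some (s', j') by rewrite /recvf Kk.
case: cmp => [lt|[es le]].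
  by move: nD'; rewrite (mono_le Tk (H1 _ _ _ _ lt E' d'0)).
subst s'; move: le; rewrite leq_eqVlt => /orP[/eqP ej|lt].
  by subst j'; have [_ ] := recv_notin pk'.
by move: nD'; rewrite (mono_le Tk (H2 _ _ _ lt E' d'0)).
Qed.

Lemma fair_core s : exists T, forall s' j d m, s' < s ->
  onth (sent exec s') j = Some (d, m) -> d != ord0 -> (s', j) \in cD (cfgf T).
Proof.
elim: s => [|s [T HT]]; first by exists 0.
suff inner : forall j, exists T', (forall s' j' d m, s' < s -> onth (sent exec s') j' = Some (d, m) -> d != ord0 -> (s', j') \in cD (cfgf T')) /\
   (forall j' d m, j' < j -> onth (sent exec s) j' = Some (d, m) -> d != ord0 -> (s, j') \in cD (cfgf T')).
  have [T' [H1 H2]] := inner (size (sent exec s)).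
  exists T' => s' j d m; rewrite ltnS leq_eqVlt => /orP[/eqP ->|lt]; last exact: H1.
  move=> E; apply: (H2 _ _ _ _ E); rewrite ltnNge; apply/negP => /onth_default.
  by rewrite E.
elim=> [|j [T' [H1 H2]]]; first by exists T.
case E: (onth (sent exec s) j) => [[d m]|]; last first.
  exists T'; split => // j' d' m'; rewrite ltnS leq_eqVlt => /orP[/eqP ->|lt]; last exact: H2.
  by rewrite E.
case: (eqVneq d ord0) => [d0|d0].
  exists T'; split => // j' d' m'; rewrite ltnS leq_eqVlt => /orP[/eqP ->|lt]; last exact: H2.
  by rewrite E => -[<- _]; rewrite d0 eqxx.
have [k [hk sk]] := sched_hit (maxn T' s.+1) d0.
have Tk : T' <= k by apply: leq_trans hk; rewrite leq_maxl.
have sk' : s < k by apply: leq_trans hk; rewrite leq_maxr.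
have Hd := deliver_at Tk sk' sk d0 E H1 H2.
exists k.+1; split.
  by move=> s' j' d' m' lt E' d'0; apply: (mono_le (leqW Tk)); apply: H1 E' d'0.
move=> j' d' m'; rewrite ltnS leq_eqVlt => /orP[/eqP ->|lt] //.
by move=> E' d'0; apply: (mono_le (leqW Tk)); apply: H2 E' d'0.
Qed.

Lemma fair s j d m : onth (sent exec s) j = Some (d, m) -> correct exec d ->
  exists k, recv exec k = Some (s, j).
Proof.
move=> E /correct_ne0 d0.
have [T HT] := fair_core s.+1.
have := HT s j d m (ltnSn s) E d0; clear HT.
elim: T => [|T IH] //=.
case R: (recvf T (cfgf T)) => [y|] //; rewrite inE => /orP[/eqP e|]; last exact: IH.
by exists T; rewrite /= R e.
Qed.

End Construct.

Lemma cfg_prefix n Block (P : protocol n Block) init K k : k <= K ->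
  @cfgf _ _ P init (Some K) k = @cfgf _ _ P init None k.
Proof.
elim: k => [|k IH] // kK; rewrite /= IH ?(ltnW kK) //.
have e : (Some K == Some k) = false by apply/negbTE; rewrite /eq_op /= neq_ltn kK orbT.
by rewrite /next /out /recvf /schedf e.
Qed.

Theorem lemma2 (n t : nat) (Block : Type) (v : 'I_n.+1 -> Block) :
  injective v -> (1 <= n)%N -> (1 <= t)%N -> (t.*2 < n.+1)%N ->
  forall P : protocol n Block, ~ solves_t_resilient P t v.
Proof.
move=> _ n1 t1 _ P H.
pose a := fun p : 'I_n.+1 => if p == ord0 then Vbot else V1.
pose init := fun p => @p_init _ _ P p (v p, a p).
have adm : forall K, admissible t v a (exec init K).
  move=> K; split.
  - by move=> p.
  - by move=> k q hq /=; rewrite (negbTE hq).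
  - exact: step_ok.
  - by split; [move=> k k' sj; exact: recv_inj | move=> s j d m; exact: fair].
  - exists [set ord0]; split; first by rewrite cards1.
    by move=> p; rewrite in_set1; exact: correct_all.
have [H1c [tau [Xt Ht]]] := H a _ (adm None).
pose p1 : 'I_n.+1 := inord 1.
have p10 : p1 != ord0 by apply/eqP => /(congr1 (@nat_of_ord _)); rewrite /p1 inordK.
have [b [k0 Hb]] := H1c p1 (correct_all init None n1 p10).
have btrue : b = true.
  have all1 : forall x, part_inputs (exec init None) v a x -> x.2 = V1.
    move=> x [p [[k hk] ->]] /=; rewrite /a.
    by move: hk => /= <-; rewrite (negbTE (rr_ne0 n1 k)).
  case: Xt => [[_ e]|[[[x [hx hb]] _]|[hn _]]].
  - by have := Ht _ _ (ex_intro _ k0 Hb); rewrite e in_set1 => /eqP.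
  - by rewrite all1 in hb.
  - by case: hn.
have [_ [tau2 [Xt2 Ht2]]] := H a _ (adm (Some k0)).
have dec : decides (exec init (Some k0)) p1 true.
  by exists k0; rewrite /= cfg_prefix // -btrue.
have bot : exists x, part_inputs (exec init (Some k0)) v a x /\ x.2 = Vbot.
  exists (v ord0, a ord0); split; last by rewrite /a eqxx.
  exists ord0; split => //; exists k0; by rewrite /= /schedf eqxx.
case: Xt2 => [[hall _]|[[_ e]|[_ [hn _]]]].
- by case: bot => x [hx hb]; rewrite hall in hb.
- by have := Ht2 _ _ dec; rewrite e in_set1.
- by case: hn.
Qed.
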